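(* Let $a$ be the MMF allocation computed with entitlements $e$ and reported demands $\bar d_1,\dots,\bar d_n$, where $\bar d_i\ge d_i^*$ for all $i$, and let $\underline d_i\le d_i^*$ for all $i$. Then $\ell(d^*,a)\le\sum_{i=1}^n(\bar d_i-d_i^* )\le\sum_{i=1}^n(\bar d_i-\underline d_i)$.
   Context: A divisible resource of size $1$ is shared by $n$ agents with entitlements $e_i>0$, $\sum_ie_i=1$, and true demands $d_i^*\ge0$. MMF$(e,d)$ on reported demands $d_1,\dots,d_n\ge0$: set $r=1$, $E=1$, $S=\{1,\dots,n\}$, $a=0$; process agents $j$ in ascending order of $d_j/e_j$; if $d_j<re_j/E$, set $a_j=d_j$, remove $j$ from $S$, $r\leftarrow r-d_j$, $E\leftarrow E-e_j$ and continue; otherwise set $a_k=re_k/E$ for all $k\in S$ and stop; output $a$. For $d,a\in\mathbb{R}_+^n$: $\ell_{ur}(a)=1-\sum_ia_i$, $\ell_{or}(d,a)=\sum_i(a_i-d_i)^+$, $\ell_{ud}(d,a)=\sum_i(d_i-a_i)^+$, $\ell(d,a)=\min(\ell_{ur}(a)+\ell_{or}(d,a),\ell_{ud}(d,a))$. *)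

(* Defs.v *)
From HB Require Import structures.
From mathcomp Require Import all_boot all_order all_algebra.
Set Implicit Arguments. Unset Strict Implicit. Unset Printing Implicit Defensive.
Import Order.TTheory GRing.Theory Num.Theory.
Local Open Scope ring_scope.

Section MMF.
Variables (R : realFieldType) (n : nat).

Definition pos (x : R) : R := Num.max x 0.

(* One run of the MMF loop, processing agents in the order given by s,
   with remaining resource r, remaining entitlement E, current allocation a. *)
Fixpoint mmf_run (e d : 'I_n -> R) (r E : R) (s : seq 'I_n) (a : 'I_n -> R)
  : 'I_n -> R :=
  match s with
  | [::] => a
  | j :: s' =>
      if d j < r * e j / E then
        mmf_run e d (r - d j) (E - e j) s'
          (fun k => if k == j then d j else a k)
      else (fun k => if k \in s then r * e k / E else a k)
  end.

Definition MMF (e d : 'I_n -> R) (s : seq 'I_n) : 'I_n -> R :=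
  mmf_run e d 1 1 s (fun _ => 0).

Definition mmf_order (e d : 'I_n -> R) (s : seq 'I_n) : bool :=
  perm_eq s (enum 'I_n) && sorted (fun i j => d i / e i <= d j / e j) s.

Definition l_ur (a : 'I_n -> R) : R := 1 - \sum_i a i.
Definition l_or (d a : 'I_n -> R) : R := \sum_i pos (a i - d i).
Definition l_ud (d a : 'I_n -> R) : R := \sum_i pos (d i - a i).
Definition loss (d a : 'I_n -> R) : R := Num.min (l_ur a + l_or d a) (l_ud d a).

End MMF.

(* Main.v *)
Require Import Defs.
From HB Require Import structures.
From mathcomp Require Import all_boot all_order all_algebra.
Import Order.TTheory GRing.Theory Num.Theory.
Local Open Scope ring_scope.

Lemma run_inv (R : realFieldType) (n : nat) (e d : 'I_n -> R)
  (he_pos : forall i, 0 < e i) (s : seq 'I_n) :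
  forall r E a, uniq s ->
  sorted (fun i j => d i / e i <= d j / e j) s ->
  E = \sum_(k <- s) e k ->
  let b := mmf_run e d r E s a in
  (forall k, k \notin s -> b k = a k) /\
  ((forall k, k \in s -> b k = d k) \/
   (\sum_(k <- s) b k = r /\ forall k, k \in s -> b k <= d k)).
Proof.
elim: s => [|j s IH] r E a /=.
  by move=> _ _ _; split => //; left.
move=> /andP[js us] ps HE.
have ps' : sorted (fun i j => d i / e i <= d j / e j) s by exact: path_sorted ps.
case: ifP => Hlt.
  have HE' : E - e j = \sum_(k <- s) e k by rewrite HE big_cons addrC addKr.
  have [H1 H2] := IH (r - d j) (E - e j) (fun k => if k == j then d j else a k) us ps' HE'.
  set b := mmf_run _ _ _ _ _ _ in H1 H2 *.
  have bj : b j = d j by rewrite H1 // eqxx.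
  split.
    move=> k; rewrite in_cons negb_or => /andP[kj ks]; by rewrite H1 // (negbTE kj).
  case: H2 => [H2|[H2 H3]].
    left => k; rewrite in_cons => /orP[/eqP->|ks]; [exact bj | exact: H2].
  right; split.
    by rewrite big_cons H2 bj addrC subrK.
  move=> k; rewrite in_cons => /orP[/eqP->|ks]; [by rewrite bj | exact: H3].
have Epos : 0 < E.
  rewrite HE big_cons; apply: ltr_wpDr => //.
  by rewrite big_seq; apply: sumr_ge0 => i _; exact: ltW.
have key : forall k, k \in j :: s -> r * e k / E <= d k.
  have hj : r * e j / E <= d j by rewrite leNgt Hlt.
  have hrE : r / E <= d j / e j.
    by rewrite ler_pdivlMr // mulrAC.
  move=> k; rewrite in_cons => /orP[/eqP->//|ks].
  have := @order_path_min _ (fun i j => d i / e i <= d j / e j) j s (fun x y z => @le_trans _ _ (d x / e x) (d y / e y) (d z / e z)) ps => /allP /(_ k ks) hk.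
  rewrite mulrAC -ler_pdivlMr //; exact: le_trans hrE hk.
split.
  by move=> k /negbTE ->.
right; split; last by move=> k ks; rewrite ks; exact: key.
rewrite big_seq_cond.
under eq_bigr => k /andP[-> _] do rewrite mulrAC.
rewrite -big_seq_cond -mulr_sumr -HE.
by rewrite divfK // gt_eqF.
Qed.

Theorem lemma1 (R : realFieldType) (n : nat) (e dstar dbar dlow : 'I_n -> R)
  (s : seq 'I_n)
  (he_pos : forall i, 0 < e i) (he_sum : \sum_i e i = 1)
  (hdstar : forall i, 0 <= dstar i)
  (hdbar : forall i, dstar i <= dbar i)
  (hdlow : forall i, dlow i <= dstar i)
  (hs : mmf_order e dbar s) :
  let a := MMF e dbar s in
  loss dstar a <= \sum_i (dbar i - dstar i) /\
  \sum_i (dbar i - dstar i) <= \sum_i (dbar i - dlow i).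
Proof.
move=> a; split; last first.
  by apply: ler_sum => i _; rewrite lerD2l lerN2.
case/andP: hs => hp hsort.
have us : uniq s by rewrite (perm_uniq hp) enum_uniq.
have mem : forall k, k \in s by move=> k; rewrite (perm_mem hp) mem_enum.
have sumE : forall F : 'I_n -> R, \sum_(k <- s) F k = \sum_i F i.
  by move=> F; rewrite (perm_big _ hp) big_enum.
have HE : (1 : R) = \sum_(k <- s) e k by rewrite sumE.
have [_ H] := @run_inv R n e dbar he_pos s 1 1 (fun _ => 0) us hsort HE.
have ge0 : 0 <= \sum_i (dbar i - dstar i).
  by apply: sumr_ge0 => i _; rewrite subr_ge0.
case: H => [H|[H1 H2]].
  rewrite /loss ge_min; apply/orP; right.
  rewrite /l_ud big1 ?ge0 // => i _.
  by rewrite /a /MMF H ?mem // /pos max_r // subr_le0.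
rewrite /loss ge_min; apply/orP; left.
rewrite /l_ur /a /MMF -sumE H1 subrr add0r /l_or.
apply: ler_sum => i _.
rewrite /pos ge_max subr_ge0 hdbar andbT lerD2r.
exact: H2.
Qed.
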